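(* Let $M,N$ be weight sequences with $m_k^{1/k}\to\infty$, $n_k^{1/k}\to\infty$ and $C:=\mathrm{mg}(M,N)<\infty$. Then $h_m(t)\le C^jn_jt^jh_n(Ct)$ for all $t>0$ and $j\in\mathbb{N}$, and $h_m(t)\le h_n\big(\tfrac{eC}{2}t\big)^2$ for all $t>0$.
   Context: A weight sequence is a sequence $M=(M_k)_{k\ge0}$ of positive reals with $M_k=\mu_1\cdots\mu_k$, $M_0=1$, where $(\mu_k)$ is positive and increasing with $\mu_0=1$, and $M_k^{1/k}\to\infty$; $m_k:=M_k/k!$, $n_k:=N_k/k!$. For a positive sequence $m$ with $m_0=1$ and $m_k^{1/k}\to\infty$, $h_m(t):=\inf_{k\in\mathbb{N}}m_kt^k$ for $t>0$. For positive sequences, $\mathrm{mg}(M,N):=\sup_{j,k\ge0,j+k\ge1}(M_{j+k}/(N_jN_k))^{1/(j+k)}\in(0,\infty]$. *)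

(* Defs.v *)
From HB Require Import structures.
From mathcomp Require Import all_boot all_order all_algebra.
From mathcomp Require Import all_classical all_reals all_analysis.
Set Implicit Arguments. Unset Strict Implicit. Unset Printing Implicit Defensive.
Import Order.TTheory GRing.Theory Num.Theory.
Import numFieldNormedType.Exports.
Local Open Scope classical_set_scope.
Local Open Scope ring_scope.

Definition weight_seq {R : realType} (M : nat -> R) : Prop :=
  (exists mu : nat -> R,
      mu 0%N = 1 /\ (forall k, 0 < mu k) /\ (forall k, mu k <= mu k.+1) /\
      (forall k, M k = \prod_(1 <= i < k.+1) mu i)) /\
  ((fun k : nat => M k `^ (k%:R^-1)) @ \oo --> +oo).

Definition fact_div {R : realType} (M : nat -> R) (k : nat) : R := M k / (k`!)%:R.

Definition hfun {R : realType} (m : nat -> R) (t : R) : R :=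
  inf [set m k * t ^+ k | k in [set: nat]].

Definition mg {R : realType} (M N : nat -> R) : \bar R :=
  ereal_sup [set ((M (jk.1 + jk.2)%N / (N jk.1 * N jk.2)) `^ (((jk.1 + jk.2)%N)%:R^-1))%:E
            | jk in [set jk : nat * nat | (1 <= jk.1 + jk.2)%N]].

(* Main.v *)
Require Import Defs.
From HB Require Import structures.
From mathcomp Require Import all_boot all_order all_algebra.
From mathcomp Require Import all_classical all_reals all_analysis.
From mathcomp Require Import ring lra.
Import Order.TTheory GRing.Theory Num.Theory.
Import numFieldNormedType.Exports.
Local Open Scope classical_set_scope.
Local Open Scope ring_scope.

Lemma ws_pos (R : realType) (M : nat -> R) :
  weight_seq M -> (forall k, 0 < M k) /\ M 0%N = 1.
Proof.
move=> [[mu [mu0 [mupos [_ Mdef]]]] _]; split.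
  by move=> k; rewrite Mdef; apply: prodr_gt0 => i _; exact: mupos.
by rewrite Mdef big_geq.
Qed.

Lemma mg_bound (R : realType) (M N : nat -> R) (C : R) :
  weight_seq M -> weight_seq N -> mg M N = C%:E ->
  0 < C /\ forall j k, M (j + k)%N <= C ^+ (j + k) * (N j * N k).
Proof.
move=> /ws_pos [Mp M0] /ws_pos [Np N0] hC.
have key j k : (1 <= j + k)%N ->
    (M (j + k)%N / (N j * N k)) `^ (((j + k)%N)%:R^-1) <= C.
  move=> hjk; rewrite -lee_fin -hC /mg; apply: ereal_sup_ubound.
  by exists (j, k).
have Cp : 0 < C.
  apply: (lt_le_trans _ (key 1%N 0%N isT)); apply: powR_gt0.
  by rewrite divr_gt0 ?mulr_gt0.
split => // j k.
case: (posnP (j + k)%N) => hjk.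
  move/eqP: (hjk); rewrite addn_eq0 => /andP[/eqP j0 /eqP k0].
  by rewrite hjk j0 k0 M0 N0 expr0 !mul1r.
set x := M (j + k)%N / (N j * N k).
have xp : 0 < x by rewrite divr_gt0 ?mulr_gt0.
have NN : 0 < N j * N k by rewrite mulr_gt0.
have -> : M (j + k)%N = x * (N j * N k) by rewrite /x divfK ?gt_eqF.
rewrite ler_pM2r //.
have -> : x = (x `^ (((j + k)%N)%:R^-1)) ^+ (j + k).
  rewrite -powR_mulrn ?powR_ge0 // -powRrM mulVf ?powRr1 ?ltW //.
  by rewrite pnatr_eq0 -lt0n.
rewrite ler_pXn2r ?inE ?powR_ge0 ?(ltW Cp) //.
- exact: key.
- by rewrite qualifE /= powR_ge0.
- by rewrite qualifE /= ltW.
Qed.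

Lemma core (R : realType) (M N : nat -> R) (C : R) :
  weight_seq M -> weight_seq N -> mg M N = C%:E ->
  forall j k (t : R), 0 < t ->
  fact_div M (j + k) * t ^+ (j + k) <=
    C ^+ j * fact_div N j * t ^+ j * (fact_div N k * (C * t) ^+ k).
Proof.
move=> wM wN hC j k t tp.
have [Cp Mb] := @mg_bound R M N C wM wN hC.
have [Np _] := @ws_pos R N wN.
have Fp n : 0 < (n`!)%:R :> R by rewrite ltr0n fact_gt0.
have GF : ((j`! * k`!)%N)%:R <= ((j + k)`!)%:R :> R.
  rewrite ler_nat -(bin_fact (leq_addr k j)) addKn.
  by rewrite leq_pmull // bin_gt0 leq_addr.
apply: (@le_trans _ _ (C ^+ (j + k) * (N j * N k) / ((j`! * k`!)%N)%:R * t ^+ (j + k))).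
  rewrite ler_pM2r ?exprn_gt0 // /fact_div.
  apply: (@le_trans _ _ (C ^+ (j + k) * (N j * N k) / ((j + k)`!)%:R)).
    by rewrite ler_pM2r ?invr_gt0 // Mb.
  rewrite ler_pM2l ?mulr_gt0 ?exprn_gt0 //.
  rewrite lef_pV2 ?inE ?Fp //.
  - by rewrite qualifE /= Fp.
  - by rewrite qualifE /= natrM mulr_gt0.
rewrite /fact_div natrM !exprD exprMn invfM; rewrite le_eqVlt; apply/orP; left; apply/eqP.
ring.
Qed.

Lemma hfun_le (R : realType) (m : nat -> R) (t : R) :
  (forall k, 0 <= m k) -> 0 <= t -> forall k, hfun m t <= m k * t ^+ k.
Proof.
move=> mp tp k; apply: ge_inf; last by exists k.
by exists 0 => _ [i _ <-]; rewrite mulr_ge0 ?exprn_ge0.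
Qed.

Lemma hfun_ge (R : realType) (m : nat -> R) (t x : R) :
  (forall k, x <= m k * t ^+ k) -> x <= hfun m t.
Proof.
move=> h; apply: lb_le_inf; first by exists (m 0%N * t ^+ 0); exists 0%N.
by move=> _ [i _ <-].
Qed.

Theorem lemma5p1 (R : realType) (M N : nat -> R) (C : R) :
  weight_seq M -> weight_seq N ->
  ((fun k : nat => fact_div M k `^ (k%:R^-1)) @ \oo --> +oo) ->
  ((fun k : nat => fact_div N k `^ (k%:R^-1)) @ \oo --> +oo) ->
  mg M N = C%:E ->
  (forall (t : R) (j : nat), 0 < t ->
     hfun (fact_div M) t <= C ^+ j * fact_div N j * t ^+ j * hfun (fact_div N) (C * t)) /\
  (forall t : R, 0 < t ->
     hfun (fact_div M) t <= (hfun (fact_div N) (expR 1 * C / 2 * t)) ^+ 2).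
Proof.
move=> wM wN _ _ hC.
have [Cp _] := @mg_bound R M N C wM wN hC.
have [Mp _] := @ws_pos R M wM.
have [Np _] := @ws_pos R N wN.
have mp k : 0 <= fact_div M k by rewrite /fact_div ltW // divr_gt0 // ltr0n fact_gt0.
have np k : 0 < fact_div N k by rewrite /fact_div divr_gt0 // ltr0n fact_gt0.
split.
  move=> t j tp.
  have cp : 0 < C ^+ j * fact_div N j * t ^+ j by rewrite !mulr_gt0 ?exprn_gt0.
  rewrite -ler_pdivrMl //; apply: (@hfun_ge R) => k.
  rewrite ler_pdivrMl //.
  apply: le_trans (@hfun_le R _ t mp (ltW tp) (j + k)) _.
  exact: (@core R M N C wM wN hC).
move=> t tp.
set a := hfun (fact_div M) t.
have a0 : 0 <= a by apply: (@hfun_ge R) => k; rewrite mulr_ge0 ?mp ?exprn_ge0 ?ltW.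
set s := expR 1 * C / 2 * t.
have e2 : 2 <= expR 1 :> R by have := expR_ge1Dx (1 : R); move=> ?; lra.
have Ctp : 0 < C * t by rewrite mulr_gt0.
have Cts : C * t <= s by rewrite /s; nra.
have sp : 0 <= s by apply: le_trans Cts; exact: ltW.
have h0 : 0 <= hfun (fact_div N) s.
  by apply: (@hfun_ge R) => k; apply: mulr_ge0; [exact: ltW | exact: exprn_ge0].
have hs : Num.sqrt a <= hfun (fact_div N) s.
  apply: (@hfun_ge R) => k.
  have y0 : 0 <= fact_div N k * s ^+ k by apply: mulr_ge0; [exact: ltW | exact: exprn_ge0].
  rewrite -[X in _ <= X]ger0_norm // -sqrtr_sqr ler_sqrt ?sqr_ge0 //.
  apply: le_trans (@hfun_le R _ t mp (ltW tp) (k + k)) _.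
  apply: le_trans (@core R M N C wM wN hC k k t tp) _.
  have -> : C ^+ k * fact_div N k * t ^+ k * (fact_div N k * (C * t) ^+ k)
      = (fact_div N k * (C * t) ^+ k) ^+ 2 by rewrite exprMn; ring.
  rewrite ler_pXn2r //.
  - rewrite ler_pM2l //; apply: lerXn2r => //.
    by rewrite qualifE /= (ltW Ctp).
  - by rewrite qualifE /=; apply: mulr_ge0; [exact: ltW | exact: exprn_ge0 (ltW Ctp)].
rewrite -(sqr_sqrtr a0) ler_pXn2r //.
- by rewrite qualifE /= sqrtr_ge0.
Qed.
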